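(* Let $M$ be a Noetherian right $R$-module having the summand sum property. Then $M$ is principally Goldie*-lifting if and only if $M$ is Goldie*-lifting.
   Context: $R$ is an associative ring with identity; modules are unital right $R$-modules. $M$ has the summand sum property if the sum of any two direct summands of $M$ is a direct summand. $K\ll M$ means $K$ is small in $M$. For submodules $X,Y$ of $M$, $X\,\beta^*\,Y$ means $(X+Y)/X\ll M/X$ and $(X+Y)/Y\ll M/Y$. $M$ is Goldie*-lifting if for every submodule $X$ of $M$ there is a direct summand $D$ of $M$ with $X\,\beta^*\,D$; $M$ is principally Goldie*-lifting if this holds for every cyclic submodule $X$. *)

(* Defs.v *)
(* Right R-modules are modelled as left modules over the
   converse ring R^c, with the right action  m . r := r *: m. *)
From HB Require Import structures.
From mathcomp Require Import all_boot all_order all_algebra.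
Set Implicit Arguments. Unset Strict Implicit. Unset Printing Implicit Defensive.
Import GRing.Theory.
Local Open Scope ring_scope.

Section Modules.
Variables (R : pzRingType) (M : lmodType R^c).

(* Subsets of M are predicates (M need not be finite). *)
Definition subset_of (A B : M -> Prop) := forall m, A m -> B m.
Definition seteq (A B : M -> Prop) := forall m, A m <-> B m.
Definition fullset : M -> Prop := fun _ => True.
Definition zeroset : M -> Prop := fun m => m = 0.

Definition submodule (X : M -> Prop) : Prop :=
  X 0 /\ (forall x y, X x -> X y -> X (x + y)) /\
  (forall (r : R^c) x, X x -> X (r *: x)).

Definition sumset (X Y : M -> Prop) : M -> Prop :=
  fun m => exists x y, X x /\ Y y /\ m = x + y.
Definition capset (X Y : M -> Prop) : M -> Prop := fun m => X m /\ Y m.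

Definition cyclic_sub (x : M) : M -> Prop := fun m => exists r : R^c, m = r *: x.

Definition direct_summand (D : M -> Prop) : Prop :=
  submodule D /\ exists D', submodule D' /\
    seteq (sumset D D') fullset /\ seteq (capset D D') zeroset.

Definition small (K : M -> Prop) : Prop :=
  submodule K /\ forall L, submodule L -> seteq (sumset K L) fullset -> seteq L fullset.

(* For submodules X <= A of M:  A/X << M/X.  Via the correspondence between
   submodules of M/X and submodules L of M containing X (L/X), and since
   A/X + L/X = (A + L)/X, this reads: every submodule L >= X with
   A + L = M equals M. *)
Definition small_mod (X A : M -> Prop) : Prop :=
  forall L, submodule L -> subset_of X L ->
    seteq (sumset A L) fullset -> seteq L fullset.

Definition beta_star (X Y : M -> Prop) : Prop :=
  small_mod X (sumset X Y) /\ small_mod Y (sumset X Y).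

Definition summand_sum_property : Prop :=
  forall D1 D2, direct_summand D1 -> direct_summand D2 -> direct_summand (sumset D1 D2).

Definition noetherian : Prop :=
  forall f : nat -> M -> Prop, (forall n, submodule (f n)) ->
    (forall n, subset_of (f n) (f n.+1)) ->
    exists N, forall n, (N <= n)%N -> seteq (f n) (f N).

Definition goldie_star_lifting : Prop :=
  forall X, submodule X -> exists D, direct_summand D /\ beta_star X D.

Definition principally_goldie_star_lifting : Prop :=
  forall x : M, exists D, direct_summand D /\ beta_star (cyclic_sub x) D.
End Modules.

(* Main.v *)
Require Import Defs.
From HB Require Import structures.
From mathcomp Require Import all_boot all_order all_algebra.
From Stdlib Require Import Classical ClassicalEpsilon.

Set Implicit Arguments. Unset Strict Implicit.
Section Aux.
Import GRing.Theory.
Local Open Scope ring_scope.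
Variables (R : pzRingType) (M : lmodType R^c).
Implicit Types X Y L D : M -> Prop.

Lemma sub_sumset X Y : submodule X -> submodule Y -> submodule (sumset X Y).
Proof.
move=> [X0 [XD XZ]] [Y0 [YD YZ]]; split; first by exists 0, 0; rewrite addr0.
split.
- move=> _ _ [a [b [Ha [Hb ->]]]] [c [d [Hc [Hd ->]]]].
  exists (a + c), (b + d); split; first exact: XD.
  split; first exact: YD. by rewrite addrACA.
- move=> r _ [a [b [Ha [Hb ->]]]]; exists (r *: a), (r *: b).
  split; first exact: XZ. split; first exact: YZ. by rewrite scalerDr.
Qed.

Lemma sub_cyclic (x : M) : submodule (cyclic_sub x).
Proof.
split; first by exists 0; rewrite scale0r.
split.
- by move=> _ _ [r ->] [s ->]; exists (r + s); rewrite scalerDl.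
- by move=> r _ [s ->]; exists (r * s); rewrite scalerA.
Qed.

Lemma sub_zero : submodule (@zeroset _ M).
Proof.
split; first by [].
split; first by move=> x y -> ->; rewrite addr0.
by move=> r x ->; rewrite scaler0.
Qed.

Lemma sub_full : submodule (@fullset _ M).
Proof. by []. Qed.

Lemma summand_zero : direct_summand (@zeroset _ M).
Proof.
split; first exact: sub_zero.
exists (@fullset _ M); split; first exact: sub_full.
split.
- move=> m; split => // _; exists 0, m; split => //; split => //; by rewrite add0r.
- by move=> m; split; [case | move=> ->].
Qed.

Definition half X Y := forall L, submodule L -> subset_of X L ->
  (forall m, sumset Y L m) -> forall m, L m.
Definition bs X Y := half X Y /\ half Y X.

Lemma seteq_full S : seteq S (@fullset _ M) <-> forall m, S m.
Proof. split=> H m; [by apply/H | by split]. Qed.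

Lemma absorb1 X Y L : submodule X -> submodule L -> subset_of X L ->
  forall m, sumset (sumset X Y) L m <-> sumset Y L m.
Proof.
move=> [X0 _] [_ [LD _]] XL m; split.
- move=> [_ [l [[x [y [Hx [Hy ->]]]] [Hl ->]]]].
  exists y, (x + l); split => //; split; first by apply: LD => //; apply: XL.
  by rewrite addrAC addrC.
- move=> [y [l [Hy [Hl ->]]]]; exists (0 + y), l; split => //.
  by exists 0, y.
  by rewrite add0r.
Qed.

Lemma absorb2 X Y L : submodule Y -> submodule L -> subset_of Y L ->
  forall m, sumset (sumset X Y) L m <-> sumset X L m.
Proof.
move=> [Y0 _] [_ [LD _]] YL m; split.
- move=> [_ [l [[x [y [Hx [Hy ->]]]] [Hl ->]]]].
  exists x, (y + l); split => //; split; first by apply: LD => //; apply: YL.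
  by rewrite addrA.
- move=> [x [l [Hx [Hl ->]]]]; exists (x + 0), l; split => //.
  by exists x, 0.
  by rewrite addr0.
Qed.

Lemma bsE X Y : submodule X -> submodule Y -> beta_star X Y <-> bs X Y.
Proof.
move=> sX sY; split.
- move=> [H1 H2]; split.
  + move=> L sL XL HL m; have := H1 L sL XL.
    rewrite !seteq_full => H; apply: H => m'; apply/(absorb1 _ sX sL XL); exact: HL.
  + move=> L sL YL HL m; have := H2 L sL YL.
    rewrite !seteq_full => H; apply: H => m'; apply/(absorb2 _ sY sL YL); exact: HL.
- move=> [H1 H2]; split.
  + move=> L sL XL; rewrite !seteq_full => HL; apply: (H1 L sL XL) => m.
    by apply/(absorb1 _ sX sL XL).
  + move=> L sL YL; rewrite !seteq_full => HL; apply: (H2 L sL YL) => m.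
    by apply/(absorb2 _ sY sL YL).
Qed.

Lemma half_sum X1 X2 Y1 Y2 : submodule X1 -> submodule X2 -> submodule Y2 ->
  half X1 Y1 -> half X2 Y2 -> half (sumset X1 X2) (sumset Y1 Y2).
Proof.
move=> [X10 _] [X20 _] sY2 h1 h2 L sL XL HL.
have sX1 : subset_of X1 L by move=> x Hx; apply: XL; exists x, 0; rewrite addr0.
have sX2 : subset_of X2 L by move=> x Hx; apply: XL; exists 0, x; rewrite add0r.
apply: (h2 L sL sX2).
apply: (h1 (sumset Y2 L) (sub_sumset sY2 sL)).
- move=> x Hx; exists 0, x; split; first by case: sY2.
  by split; [exact: sX1 | rewrite add0r].
- move=> m; have [_ [l [[y1 [y2 [Hy1 [Hy2 ->]]]] [Hl ->]]]] := HL m.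
  exists y1, (y2 + l); split => //; split; first by exists y2, l.
  by rewrite addrA.
Qed.

Lemma bs_sum X1 X2 Y1 Y2 : submodule X1 -> submodule X2 -> submodule Y1 ->
  submodule Y2 -> bs X1 Y1 -> bs X2 Y2 -> bs (sumset X1 X2) (sumset Y1 Y2).
Proof.
move=> s1 s2 s3 s4 [a b] [c d]; split; exact: half_sum.
Qed.

Lemma bs_eq X Y D : (forall m, Y m <-> X m) -> bs Y D -> bs X D.
Proof.
move=> E [h1 h2]; split.
- move=> L sL XL HL; apply: (h1 L sL) => // m /E; exact: XL.
- move=> L sL DL HL; apply: (h2 L sL DL) => m.
  have [x [l [Hx [Hl ->]]]] := HL m; exists x, l; split => //; exact/E.
Qed.

Lemma bs_zero : bs (@zeroset _ M) (@zeroset _ M).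
Proof.
split=> L sL _ HL m; have [x [l [-> [Hl ->]]]] := HL m; by rewrite add0r.
Qed.

End Aux.

Theorem proposition3p18 (R : pzRingType) (M : lmodType R^c)
  (hN : noetherian M) (hSSP : summand_sum_property M) :
  principally_goldie_star_lifting M <-> goldie_star_lifting M.
Proof.
Local Open Scope ring_scope.
Import GRing.Theory.
split; last by move=> hG x; apply: hG; exact: sub_cyclic.
move=> hP X hX; apply: NNPP => hno.
pose good (Y : M -> Prop) := [/\ submodule Y, subset_of Y X &
   exists D, direct_summand D /\ bs Y D].
have ext : forall Y, good Y -> exists x, X x /\ ~ Y x.
  move=> Y [sY YX [D [dD bYD]]]; apply: NNPP => hn; apply: hno; exists D.
  split => //; apply/bsE => //; first by case: dD.
  apply: bs_eq bYD => m; split; first exact: YX.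
  move=> Xm; apply: NNPP => nY; apply: hn; by exists m.
pose g (Y : M -> Prop) := epsilon (inhabits (0 : M)) (fun x => X x /\ ~ Y x).
pose step (Y : M -> Prop) := sumset Y (cyclic_sub (g Y)).
pose f n := iter n step (@zeroset _ M).
have [X0 [XD XZ]] := hX.
have goodS : forall Y, good Y -> good (step Y).
  move=> Y gY; have [Xg nYg] : X (g Y) /\ ~ Y (g Y).
    exact: (epsilon_spec (inhabits (0 : M)) (fun x => X x /\ ~ Y x) (ext Y gY)).
  case: gY => sY YX [D [dD bYD]].
  have [Dx [dDx bx]] := hP (g Y).
  split.
  - exact: sub_sumset sY (sub_cyclic _).
  - move=> _ [a [b [Ha [[r ->] ->]]]]; apply: XD; [exact: YX | exact: XZ].
  - exists (sumset D Dx); split; first exact: hSSP.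
    have sD := dD.1; have sDx := dDx.1.
    apply: bs_sum => //; first exact: sub_cyclic.
    by apply/bsE => //; exact: sub_cyclic.
have goodf : forall n, good (f n).
  elim => [|n IH]; last exact: goodS.
  split; [exact: sub_zero | by move=> m ->|].
  exists (@zeroset _ M); split; [exact: summand_zero | exact: bs_zero].
have subf : forall n, submodule (f n) by move=> n; case: (goodf n).
have incf : forall n, subset_of (f n) (f n.+1).
  move=> n m Hm; exists m, 0; split => //; split; last by rewrite addr0.
  by exists 0; rewrite scale0r.
have [N HN] := hN f subf incf.
have [Xg nYg] : X (g (f N)) /\ ~ f N (g (f N)).
  exact: (epsilon_spec (inhabits (0 : M)) (fun x => X x /\ ~ f N x) (ext _ (goodf N))).
apply: nYg; apply/(HN N.+1 (leqnSn N)).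
exists 0, (g (f N)); split; first by case: (subf N).
split; last by rewrite add0r.
by exists 1; rewrite scale1r.
Qed.
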